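(* Let $k\in\mathbb N$, $\alpha,\beta\in\mathbb R$, $0<p,q\le\infty$, and $0<\delta\le1/(2k)$. Let $J_i=[k\delta i,k\delta(i+1/2)]$ and define \[ f_\delta(x)=\begin{cases}(-1)^i, & x\in J_i,\ 0\le i\le\lfloor1/(2k\delta)\rfloor,\\ 0,&\text{otherwise}.\end{cases} \] Then $\|w_{\alpha,\beta}f_\delta\|_p\sim1$ and $\Omega_\varphi^k(f_\delta,\delta)_{w_{\alpha,\beta},q}\ge c>0$, with constants independent of $\delta$.
   Context: For $x\in[-1,1]$, $\varphi(x)=\sqrt{1-x^2}$, $w_{\alpha,\beta}(x)=(1+x)^\alpha(1-x)^\beta$; $\|\cdot\|_p$ is the $L_p[-1,1]$ (quasi)norm, $\|g\|_{L_q(S)}$ the $L_q$ (quasi)norm over $S$. $\Delta_h^k(f,x)=\sum_{i=0}^k\binom ki(-1)^{k-i}f(x-kh/2+ih)$ if $x\pm kh/2\in[-1,1]$, else $0$. For a weight $w$, $\Omega_\varphi^k(f,\delta)_{w,q}=\sup_{0<h\le\delta}\|w(x)\Delta^k_{h\varphi(x)}(f,x)\|_{L_q[-1+2k^2h^2,1-2k^2h^2]}$. $F\sim G$ means $c_1F\le G\le c_2F$ with positive constants independent of $\delta$. *)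

(* Defs.v *)
From HB Require Import structures.
From mathcomp Require Import all_boot all_order all_algebra.
From mathcomp Require Import all_classical all_reals all_analysis.
Set Implicit Arguments. Unset Strict Implicit. Unset Printing Implicit Defensive.
Import Order.TTheory GRing.Theory Num.Theory.
Import numFieldNormedType.Exports.
Local Open Scope classical_set_scope.
Local Open Scope ring_scope.

Section Defs.
Variable R : realType.

Definition vphi (x : R) : R := Num.sqrt (1 - x ^+ 2).

Definition wab (a b : R) (x : R) : R := (1 + x) `^ a * (1 - x) `^ b.

Definition LnormOn (S : set R) (q : \bar R) (g : R -> R) : \bar R :=
  Lnorm (@lebesgue_measure R) q (fun x => (if `[< S x >] then g x else 0)%:E).

Definition Lnorm11 (p : \bar R) (g : R -> R) : \bar R := LnormOn `[-1, 1] p g.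

Definition Delta (k : nat) (h : R) (f : R -> R) (x : R) : R :=
  if (-1 <= x - k%:R * h / 2) && (x + k%:R * h / 2 <= 1) then
    \sum_(i < k.+1) ('C(k, i))%:R * (-1) ^+ (k - i) * f (x - k%:R * h / 2 + i%:R * h)
  else 0.

Definition Omega (k : nat) (f : R -> R) (delta : R) (w : R -> R) (q : \bar R)
  : \bar R :=
  ereal_sup [set LnormOn `[-1 + 2 * k%:R ^+ 2 * h ^+ 2, 1 - 2 * k%:R ^+ 2 * h ^+ 2] q
                (fun x => w x * Delta k (h * vphi x) f x) | h in `]0, delta]].

Definition Jint (k : nat) (delta : R) (i : nat) : set R :=
  `[k%:R * delta * i%:R, k%:R * delta * (i%:R + 2^-1)].

(* f_delta(x) = (-1)^i on J_i for 0 <= i <= floor(1/(2 k delta)), 0 otherwise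
   (the J_i are pairwise disjoint, so this sum has at most one nonzero term) *)
Definition fdelta (k : nat) (delta : R) (x : R) : R :=
  \sum_(i < (Num.truncn (1 / (2 * k%:R * delta))).+1)
     (if `[< Jint k delta i x >] then (-1) ^+ i else 0).

End Defs.

(* Main.v *)
Require Import Defs.
From HB Require Import structures.
From mathcomp Require Import all_boot all_order all_algebra.
From mathcomp Require Import all_classical all_reals all_analysis.
From mathcomp Require Import measurable_realfun ess_sup_inf.
From mathcomp.algebra_tactics Require Import ring lra.
Import Order.TTheory GRing.Theory Num.Theory.
Import numFieldNormedType.Exports.
Local Open Scope ring_scope.

Section Helpers.
Local Open Scope classical_set_scope.
Section Gen.
Variable R : realType.
Local Notation mu := (@lebesgue_measure R).

Lemma le_integralT_nm (f g : R -> \bar R) : (forall x, 0 <= f x)%E ->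
  (forall x, f x <= g x)%E -> (\int[mu]_x f x <= \int[mu]_x g x)%E.
Proof.
move=> f0 fg.
have g0 x : (0 <= g x)%E by apply: le_trans (fg x).
rewrite (ge0_integralTE mu f0) (ge0_integralTE mu g0).
apply: le_ereal_sup => _ [h hf <-]; exists h => //= x.
exact: le_trans (hf x) (fg x).
Qed.

Lemma measure_itvcc (a b : R) : a <= b -> mu `[a, b] = (b - a)%:E.
Proof.
move=> ab; rewrite lebesgue_measure_itv /= lte_fin.
case: (boolP (a < b)) => [lt|ge]; first by rewrite -EFinD.
have -> : a = b by apply/le_anti; rewrite ab leNgt ge.
by rewrite subrr.
Qed.

Lemma int_indic (A : set R) (c : R) : measurable A -> 0 <= c ->
  (\int[mu]_x (c * \1_A x)%:E = c%:E * mu A)%E.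
Proof.
move=> mA c0.
have := @integralZl_indic _ _ _ mu setT measurableT (fun _ => A) c.
rewrite /= => ->; last by [].
  by rewrite integral_indic // setIT.
by move=> /lt_geF; rewrite c0.
Qed.

Lemma LnormOn_lb_fin (S : set R) (r m : R) (G : R -> R) (n : nat) (a b : nat -> R) :
  0 < r -> 0 < m -> (forall i, (i < n)%N -> a i <= b i) ->
  (forall i j x, (i < n)%N -> (j < n)%N -> a i <= x <= b i -> a j <= x <= b j -> i = j) ->
  (forall i x, (i < n)%N -> a i <= x <= b i -> S x /\ m <= `|G x|) ->
  (((m `^ r * \sum_(i < n) (b i - a i)) `^ r^-1)%:E <= LnormOn S r%:E G)%E.
Proof.
move=> r0 m0 ab disj hG.
rewrite /LnormOn Lnorm.unlock /=.
have H1 : ((m `^ r * \sum_(i < n) (b i - a i))%:E <=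
   \int[mu]_x (`|(if `[< S x >] then G x else 0)%:E| `^ r))%E.
  apply: le_trans (@le_integralT_nm
    (fun x => \sum_(i < n) ((m `^ r * \1_(`[a i, b i]) x))%:E) _ _ _).
  -
    rewrite ge0_integral_sum //; last first.
      by move=> i x _; rewrite lee_fin mulr_ge0 ?powR_ge0.
    + move=> i; apply/measurable_EFinP; apply: measurable_funM => //.
    + rewrite (eq_bigr (fun i : 'I_n => ((m `^ r) * (b i - a i))%:E)); last first.
        move=> i _.
        by rewrite int_indic ?powR_ge0 // measure_itvcc ?ab.
      by rewrite sumEFin mulr_sumr.
  - by move=> x; rewrite sumEFin lee_fin sumr_ge0 // => i _; rewrite mulr_ge0 ?powR_ge0.
  - move=> x /=; rewrite sumEFin.
    have [[i ilt xi]|nox] := pselect (exists2 i, (i < n)%N & a i <= x <= b i).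
    + rewrite (bigD1 (Ordinal ilt)) //= big1; last first.
        move=> j /eqP jne; rewrite indicE.
        case: (boolP (x \in _)) => [|_]; last by rewrite mulr0.
        move=> /set_mem; rewrite /= in_itv /= => xj; exfalso; apply: jne; apply: val_inj => /=.
        exact: (disj _ _ _ (ltn_ord j) ilt xj xi).
      have [Sx mG] := hG _ _ ilt xi.
      rewrite indicE (_ : x \in _ = true); last by apply/mem_set; rewrite /= in_itv.
      rewrite mulr1 addr0 asboolT //= lee_fin.
      by apply: ge0_ler_powR; rewrite ?nnegrE ?(ltW r0) ?(ltW m0).
    + rewrite big1 ?lee_fin ?powR_ge0 //.
      move=> j _; rewrite indicE.
      case: (boolP (x \in _)) => [|_]; last by rewrite mulr0.
      by move=> /set_mem; rewrite /= in_itv /= => xj; exfalso; apply: nox; exists j.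
have := gt0_ler_poweR (r := r^-1) _ _ _ H1.
apply => //; first by rewrite invr_ge0 ltW.
  rewrite in_itv /= leey andbT lee_fin; apply: mulr_ge0; first exact: powR_ge0.
  by apply: sumr_ge0 => i _; rewrite subr_ge0 ab.
by rewrite in_itv /= leey andbT; apply: integral_ge0 => x _; rewrite ?poweR_ge0 // lee_fin powR_ge0.
Qed.
Lemma muT_gt0 : (0 < mu [set: R])%E.
Proof.
apply: (@lt_le_trans _ _ (mu `[0, 1]%classic)).
  by rewrite measure_itvcc ?ler01 // lte_fin subr0 ltr01.
by apply: le_measure; rewrite ?inE //; exact: measurableT.
Qed.

Lemma LnormOn_lb_inf (S : set R) (m : R) (G : R -> R) (a b : R) : a < b ->
  (forall x, a <= x <= b -> S x /\ m <= `|G x|) -> (m%:E <= LnormOn S +oo%E G)%E.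
Proof.
move=> ab hG; rewrite /LnormOn Lnorm.unlock muT_gt0.
rewrite leNgt; apply/negP => hlt.
have [N [mN N0 sN]] := ess_sup_ge mu
  (abse \o (fun x => (if `[< S x >] then G x else 0)%:E)).
have : (mu `[a, b]%classic <= mu N)%E.
  apply: (le_measure mu); rewrite ?inE //.
  move=> x; rewrite /= in_itv /= => xab; apply: sN => hle.
  have [Sx mG] := hG _ xab.
  move: hle; rewrite /= asboolT // => hle.
  have := le_lt_trans hle hlt.
  by rewrite lte_fin ltNge mG.
rewrite N0 (measure_itvcc _ _ (ltW ab)) => h.
have : ((b - a)%:E <= 0%:E)%E by [].
by rewrite lee_fin subr_le0 leNgt ab.
Qed.

Lemma LnormOn_ub_inf (S : set R) (M : R) (G : R -> R) :
  (forall x, S x -> `|G x| <= M) -> 0 <= M -> (LnormOn S +oo%E G <= M%:E)%E.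
Proof.
move=> hG M0; rewrite /LnormOn Lnorm.unlock muT_gt0.
apply/ess_supP; apply: aeW => x /=; rewrite lee_fin.
by case: ifPn => [/asboolP /hG//|_]; rewrite normr0.
Qed.

Lemma LnormOn_ub_fin (S : set R) (r M : R) (G : R -> R) : 0 < r -> 0 <= M ->
  (forall x, S x -> `|G x| <= M * \1_(`[0, 1]%classic) x) ->
  (LnormOn S r%:E G <= ((M `^ r) `^ r^-1)%:E)%E.
Proof.
move=> r0 M0 hG; rewrite /LnormOn Lnorm.unlock /=.
have H1 : (\int[mu]_x (`|(if `[< S x >] then G x else 0)%:E| `^ r) <= (M `^ r)%:E)%E.
  apply: le_trans (@le_integralT_nm _ (fun x => (M `^ r * \1_(`[0, 1]%classic) x)%:E) _ _) _.
  - by move=> x; rewrite ?poweR_ge0 // lee_fin powR_ge0.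
  - move=> x /=; rewrite lee_fin.
    have hx : `|if `[< S x >] then G x else 0| <= M * \1_(`[0, 1]%classic) x.
      case: ifPn => [/asboolP /hG//|_]; rewrite normr0; apply: mulr_ge0 => //.
    move: hx; rewrite indicE; case: (boolP (x \in _)) => xin.
      rewrite !mulr1 => hx; apply: ge0_ler_powR; rewrite ?nnegrE ?(ltW r0) //.
    rewrite !mulr0.
    move=> h0.
    have -> : `|if `[< S x >] then G x else 0| = 0 by apply/le_anti; rewrite h0 normr_ge0.
    by rewrite powR0 // gt_eqF.
  rewrite int_indic ?powR_ge0 // measure_itvcc ?ler01 // subr0 mule1 //.
have := gt0_ler_poweR (r := r^-1) _ _ _ H1.
apply => //; first by rewrite invr_ge0 ltW.
  by rewrite in_itv /= leey andbT; apply: integral_ge0 => x _; rewrite ?poweR_ge0 // lee_fin powR_ge0.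
by rewrite in_itv /= leey andbT lee_fin powR_ge0.
Qed.

End Gen.

Section Aux.
Variable R : realType.

Lemma vphi_bnd (x : R) : -(3/4) <= x <= 3/4 -> 1/2 <= vphi x <= 1.
Proof.
move=> /andP[h1 h2].
have hx : 0 <= 1 - x ^+ 2 by nra.
have s0 := sqrtr_ge0 (1 - x ^+ 2).
have s2 := sqr_sqrtr hx.
rewrite /vphi; apply/andP; split; nra.
Qed.

Lemma vphi_lip (x y : R) : -(3/4) <= x <= 3/4 -> -(3/4) <= y <= 3/4 ->
  `|vphi x - vphi y| <= 2 * `|x - y|.
Proof.
move=> hx hy.
have /andP[sx1 sx2] := vphi_bnd _ hx.
have /andP[sy1 sy2] := vphi_bnd _ hy.
move: hx hy => /andP[hx1 hx2] /andP[hy1 hy2].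
have ex : vphi x ^+ 2 = 1 - x ^+ 2 by rewrite /vphi sqr_sqrtr //; nra.
have ey : vphi y ^+ 2 = 1 - y ^+ 2 by rewrite /vphi sqr_sqrtr //; nra.
have key : (vphi x - vphi y) * (vphi x + vphi y) = (y - x) * (y + x).
  by rewrite -[LHS]subr_sqr ex ey; ring.
have : `|vphi x - vphi y| * (vphi x + vphi y) = `|y - x| * `|y + x|.
  rewrite -normrM -key normrM; congr (_ * _); apply/esym/ger0_norm; lra.
have hyx : `|y + x| <= 3/2.
  by rewrite ler_norml; apply/andP; split; lra.
rewrite (distrC x y) => e.
have n0 := normr_ge0 (vphi x - vphi y).
have n1 := normr_ge0 (y - x).
have h1 : `|vphi x - vphi y| <= `|vphi x - vphi y| * (vphi x + vphi y).
  by rewrite ler_peMr //; lra.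
have h2 : `|y - x| * `|y + x| <= `|y - x| * (3/2) by rewrite ler_wpM2l.
lra.
Qed.

Lemma ln_bnd (a : R) : 1/4 <= a <= 2 -> `|ln a| <= 3.
Proof.
move=> /andP[a1 a2].
have a0 : 0 < a by lra.
have up : ln a <= a - 1.
  by have := @le_ln1Dx _ (a - 1); rewrite (_ : 1 + (a - 1) = a); [apply; lra | ring].
have i0 : 0 < a^-1 by rewrite invr_gt0.
have ia : a^-1 * a = 1 by rewrite mulVf // gt_eqF.
have i4 : a^-1 <= 4 by nra.
have lo : ln a^-1 <= a^-1 - 1.
  by have := @le_ln1Dx _ (a^-1 - 1); rewrite (_ : 1 + (a^-1 - 1) = a^-1); [apply; lra | ring].
rewrite lnV ?posrE // in lo.
by rewrite ler_norml; apply/andP; split; lra.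
Qed.

Lemma wab_bnd (al be x : R) : -(1/2) <= x <= 3/4 ->
  (expR (3 * (`|al| + `|be|)))^-1 <= wab al be x <= expR (3 * (`|al| + `|be|)).
Proof.
move=> /andP[x1 x2].
rewrite /wab /powR !ifF; last by apply/negbTE; rewrite gt_eqF //; lra.
  2: by apply/negbTE; rewrite gt_eqF //; lra.
rewrite -expRD -expRN.
have l1 : `|ln (1 + x)| <= 3 by apply: ln_bnd; apply/andP; split; lra.
have l2 : `|ln (1 - x)| <= 3 by apply: ln_bnd; apply/andP; split; lra.
have t1 : `|al * ln (1 + x)| <= `|al| * 3 by rewrite normrM ler_wpM2l.
have t2 : `|be * ln (1 - x)| <= `|be| * 3 by rewrite normrM ler_wpM2l.
move: t1 t2; rewrite !ler_norml => /andP[t1 t1'] /andP[t2 t2'].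
by apply/andP; split; rewrite ler_expR; lra.
Qed.

End Aux.

Section Spec.
Variable R : realType.
Variables (k : nat) (delta : R).
Hypothesis k0 : (0 < k)%N.
Hypothesis d0 : 0 < delta.
Hypothesis dk : delta <= (2 * k%:R)^-1.

Local Notation K := (k%:R : R).
Local Notation N := (Num.truncn (1 / (2 * k%:R * delta) : R)).

Lemma K1 : 1 <= K.
Proof. by rewrite ler1n. Qed.

Lemma Kd_le : K * delta <= 1/2.
Proof.
have K0 : 0 < K by rewrite ltr0n.
move: dk; rewrite invfM => h.
have : K * delta <= K * (2^-1 * K^-1) by rewrite ler_pM2l.
by rewrite mulrCA mulfV ?gt_eqF // mulr1 div1r.
Qed.

Lemma Kd_gt0 : 0 < K * delta.
Proof. by rewrite mulr_gt0 // ltr0n. Qed.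

Lemma N_bnd : K * delta * N%:R <= 1/2 /\ 1/2 < K * delta * (N%:R + 1).
Proof.
have K0 : 0 < K by rewrite ltr0n.
have a0 : 0 <= 1 / (2 * K * delta).
  by apply: divr_ge0 => //; apply: ltW; rewrite !mulr_gt0 // ltr0n.
have /andP[h1 h2] := truncn_itv a0.
have e : K * delta * (1 / (2 * K * delta)) = 1/2.
  by field; apply/andP; split; rewrite gt_eqF.
have kd := Kd_gt0.
have h3 : 1 / (2 * K * delta) < N%:R + 1 by rewrite natr1.
split.
  by rewrite -e ler_pM2l.
by rewrite -e ltr_pM2l.
Qed.

Lemma JintE i x : Jint k delta i x <-> K * delta * i%:R <= x <= K * delta * (i%:R + 2^-1).
Proof. by rewrite /Jint /= in_itv. Qed.

Lemma Jdisj i j x : Jint k delta i x -> Jint k delta j x -> i = j.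
Proof.
move=> /JintE /andP[a1 a2] /JintE /andP[b1 b2].
have kd := Kd_gt0.
case: (ltngtP i j) => // h; exfalso.
  have : i%:R + 1 <= j%:R :> R by rewrite natr1 ler_nat.
  by move=> h'; nra.
have : j%:R + 1 <= i%:R :> R by rewrite natr1 ler_nat.
by move=> h'; nra.
Qed.

Lemma fdelta_in i x : (i <= N)%N -> Jint k delta i x -> fdelta k delta x = (-1) ^+ i.
Proof.
move=> iN Jx; rewrite /fdelta.
have iN' : (i < N.+1)%N by [].
rewrite (bigD1 (Ordinal iN')) //= asboolT // big1 ?addr0 // => j /eqP jne.
case: asboolP => // Jj; exfalso; apply: jne; apply: val_inj => /=.
exact: Jdisj Jj Jx.
Qed.

Lemma fdelta_cases x : fdelta k delta x = 0 \/
  exists i, [/\ (i <= N)%N, Jint k delta i x & fdelta k delta x = (-1) ^+ i].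
Proof.
case: (pselect (exists i, (i <= N)%N /\ Jint k delta i x)) => [[i [iN Ji]]|no].
  by right; exists i; split => //; exact: fdelta_in.
left; rewrite /fdelta big1 // => j _; case: asboolP => // Jj; exfalso.
by apply: no; exists j; split => //; rewrite -ltnS.
Qed.

Lemma Jint_rng i x : (i <= N)%N -> Jint k delta i x -> 0 <= x <= 3/4.
Proof.
move=> iN /JintE /andP[a1 a2].
have kd := Kd_gt0; have [n1 _] := N_bnd; have kd2 := Kd_le.
have : i%:R <= N%:R :> R by rewrite ler_nat.
have : 0 <= i%:R :> R by [].
move=> h0 h1; apply/andP; split; nra.
Qed.

Lemma gap i x : K * delta * i%:R - K * delta / 2 < x < K * delta * i%:R ->
  forall j, ~ Jint k delta j x.
Proof.
move=> /andP[a1 a2] j /JintE /andP[b1 b2].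
have kd := Kd_gt0.
case: (ltnP j i) => h.
  have : j%:R + 1 <= i%:R :> R by rewrite natr1 ler_nat.
  by move=> h'; nra.
have : i%:R <= j%:R :> R by rewrite ler_nat.
by move=> h'; nra.
Qed.

Lemma Delta_single (f : R -> R) x H c :
  -1 <= x - K * H / 2 -> x + K * H / 2 <= 1 ->
  (forall j, (j < k)%N -> f (x - K * H / 2 + j%:R * H) = 0) ->
  f (x + K * H / 2) = c -> Delta k H f x = c.
Proof.
move=> h1 h2 hz hc; rewrite /Delta h1 h2 /=.
rewrite big_ord_recr /= big1 ?add0r; last by move=> j _; rewrite hz ?mulr0.
rewrite binn subnn expr0 mulr1 mul1r -hc.
by have -> : x - K * H / 2 + K * H = x + K * H / 2 by field.
Qed.

Local Notation h := (delta / (8 * K)).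

Lemma window i x : (i <= N)%N ->
  K * delta * i%:R - K * h * vphi (K * delta * i%:R) / 2 + h / 8 <= x <=
  K * delta * i%:R - K * h * vphi (K * delta * i%:R) / 2 + h / 4 ->
  [/\ -1 + 2 * K ^+ 2 * h ^+ 2 <= x <= 1 - 2 * K ^+ 2 * h ^+ 2,
      Delta k (h * vphi x) (fdelta k delta) x = (-1) ^+ i,
      -(1/2) <= x <= 3/4 &
      K * delta * i%:R - K * h <= x <= K * delta * i%:R].
Proof.
move=> iN /andP[w1 w2].
set xi := K * delta * i%:R in w1 w2 *.
have kd := Kd_gt0; have [n1 _] := N_bnd; have kd2 := Kd_le; have k1 := K1.
have xi0 : 0 <= xi <= 1/2.
  have : i%:R <= N%:R :> R by rewrite ler_nat.
  have : 0 <= i%:R :> R by [].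
  by move=> h0 h1'; apply/andP; split; rewrite /xi; nra.
have K0 : 0 < K by lra.
have Kh : K * h = delta / 8 by field; rewrite gt_eqF.
have h0 : 0 < h by rewrite divr_gt0 // mulr_gt0.
have hd : h <= delta / 8 by nra.
have dKd : delta <= K * delta by nra.
set p0 := vphi xi in w1 w2.
have /andP[p01 p02] : 1/2 <= p0 <= 1 by apply: vphi_bnd; apply/andP; split; lra.
have M1a : K * h * p0 <= K * h by nra.
have M1b : K * h / 2 <= K * h * p0 by nra.
have xr : xi - K * h <= x <= xi by apply/andP; split; nra.
have xr2 : -(1/16) <= x <= 1/2 by apply/andP; split; lra.
set p := vphi x.
have /andP[p1 p2] : 1/2 <= p <= 1 by apply: vphi_bnd; apply/andP; split; lra.
have lip : `|p - p0| <= 2 * `|x - xi|.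
  by apply: vphi_lip; apply/andP; split; lra.
have xd : `|x - xi| <= K * h by rewrite ler_norml; apply/andP; split; lra.
have pp : `|p - p0| <= 2 * (K * h) by lra.
move: pp; rewrite ler_norml => /andP[pp1 pp2].
have ea : K * h * (p - p0) <= 2 * (K * h) ^+ 2 by nra.
have eb : - (2 * (K * h) ^+ 2) <= K * h * (p - p0) by nra.
have Kh2 : (K * h) ^+ 2 <= h / 16.
  have -> : (K * h) ^+ 2 = h * (K * delta) / 8 by rewrite expr2 {1}Kh; field; rewrite gt_eqF.
  nra.
have M2a : K * h * p <= K * h by nra.
have M3a : h * p <= h by nra.
have M3b : h / 2 <= h * p by nra.
have dd : delta <= 1/2 by lra.
split.
- have -> : 2 * K ^+ 2 * h ^+ 2 = 2 * (K * h) ^+ 2 by ring.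
  rewrite Kh; apply/andP; split; nra.
- apply: Delta_single.
  + lra.
  + lra.
  + move=> j jk.
    have jK : j%:R + 1 <= K by rewrite natr1 ler_nat.
    have j0 : 0 <= j%:R :> R by [].
    have jH : j%:R * (h * p) <= (K - 1) * (h * p) by apply: ler_wpM2r => //; nra.
    rewrite /fdelta big1 // => l _; case: asboolP => // Jl; exfalso.
    apply: (@gap i _ _ l Jl); apply/andP; split; rewrite -/xi; nra.
  + apply: fdelta_in => //; apply/JintE; rewrite mulrDr -/xi; apply/andP; split; nra.
- apply/andP; split; lra.
- exact: xr.
Qed.

Variables al be : R.
Local Notation W := (expR (3 * (`|al| + `|be|)) : R).
Local Notation G := (fun x => wab al be x * fdelta k delta x).

Lemma W0 : 0 < W^-1.
Proof. by rewrite invr_gt0 expR_gt0. Qed.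

Lemma sign_norm i : `|(-1) ^+ i : R| = 1.
Proof. by rewrite normrX normrN1 expr1n. Qed.

Lemma absG_J i x : (i <= N)%N -> Jint k delta i x ->
  W^-1 <= `|G x| <= W /\ -1 <= x <= 1 /\ 0 <= x <= 1.
Proof.
move=> iN Jx.
have /andP[r1 r2] := Jint_rng _ _ iN Jx.
rewrite /= (fdelta_in _ _ iN Jx) normrM sign_norm mulr1.
have /andP[w1 w2] : W^-1 <= wab al be x <= W by apply: wab_bnd; apply/andP; split; lra.
have wpos : 0 <= wab al be x by apply: le_trans w1; exact: ltW W0.
rewrite ger0_norm //; split; first by rewrite w1 w2.
by split; apply/andP; split; lra.
Qed.

Lemma A_lb_fin r : 0 < r ->
  ((((W^-1) `^ r * 4^-1) `^ r^-1)%:E <= Lnorm11 r%:E G)%E.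
Proof.
move=> r0; rewrite /Lnorm11.
have kd := Kd_gt0; have [_ n2] := N_bnd.
apply: le_trans (@LnormOn_lb_fin R `[-1, 1]%classic r (W^-1) G N.+1
  (fun i => K * delta * i%:R) (fun i => K * delta * (i%:R + 2^-1)) r0 W0 _ _ _).
- rewrite lee_fin; apply: ge0_ler_powR.
  + by rewrite invr_ge0 ltW.
  + by rewrite nnegrE; apply: mulr_ge0 => //; exact: powR_ge0.
  + rewrite nnegrE; apply: mulr_ge0; first exact: powR_ge0.
    apply: sumr_ge0 => i _; rewrite subr_ge0.
    by rewrite ler_pM2l // lerDl.
  + apply: ler_wpM2l; first exact: powR_ge0.
    rewrite (eq_bigr (fun _ => K * delta / 2)); last by move=> i _; field.
    rewrite sumr_const card_ord mulrSr -mulr_natr; lra.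
- by move=> i _; rewrite ler_pM2l // lerDl.
- move=> i j x _ _ hi hj; apply: (@Jdisj i j x); exact/JintE.
- move=> i x iN hx.
  have Jx : Jint k delta i x by exact/JintE.
  have [/andP[g1 _] [s1 _]] := absG_J _ _ iN Jx.
  by split => //=; rewrite in_itv.
Qed.

Lemma A_lb_inf : ((W^-1)%:E <= Lnorm11 +oo%E G)%E.
Proof.
rewrite /Lnorm11; have kd := Kd_gt0.
apply: (@LnormOn_lb_inf R _ _ _ 0 (K * delta / 2)); first by lra.
move=> x hx.
have Jx : Jint k delta 0 x by apply/JintE; rewrite mulr0 add0r; exact: hx.
have [/andP[g1 _] [s1 _]] := absG_J _ _ (leq0n N) Jx.
by split => //=; rewrite in_itv.
Qed.

Lemma A_ub x : `[-1, 1]%classic x -> `|G x| <= W * \1_(`[0, 1]%classic) x.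
Proof.
move=> _; have Wp : 0 < W by rewrite expR_gt0.
case: (fdelta_cases x) => [/= ->|[i [iN Jx _]]].
  by rewrite mulr0 normr0; apply: mulr_ge0 => //; exact: ltW.
have [/andP[_ g2] [_ s2]] := absG_J _ _ iN Jx.
by rewrite indicE mem_set ?mulr1 //= in_itv.
Qed.

Lemma A_ub_fin r : 0 < r ->
  (Lnorm11 r%:E G <= (((W `^ r) `^ r^-1))%:E)%E.
Proof.
move=> r0; apply: (@LnormOn_ub_fin R _ r W G r0 (ltW (expR_gt0 _))).
exact: A_ub.
Qed.

Lemma A_ub_inf : (Lnorm11 +oo%E G <= W%:E)%E.
Proof.
apply: LnormOn_ub_inf; last by rewrite ltW // expR_gt0.
move=> x /A_ub; rewrite indicE; case: (_ \in _); rewrite ?mulr1 ?mulr0 // => h.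
apply: le_trans h _; exact: ltW (expR_gt0 _).
Qed.

Local Notation Sh := (`[-1 + 2 * K ^+ 2 * h ^+ 2, 1 - 2 * K ^+ 2 * h ^+ 2]%classic : set R).
Local Notation GD := (fun x => wab al be x * Delta k (h * vphi x) (fdelta k delta) x).

Lemma Omega_ge q : (LnormOn Sh q GD <= Omega k (fdelta k delta) delta (wab al be) q)%E.
Proof.
have k1 := K1.
have K0 : 0 < K by lra.
have h0 : 0 < h by rewrite divr_gt0 // mulr_gt0.
have Kh : K * h = delta / 8 by field; rewrite gt_eqF.
rewrite /Omega; apply: ereal_sup_ubound; exists h => //=.
rewrite in_itv /=; apply/andP; split => //; nra.
Qed.

Lemma win_prop i x : (i <= N)%N ->
  K * delta * i%:R - K * h * vphi (K * delta * i%:R) / 2 + h / 8 <= x <=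
  K * delta * i%:R - K * h * vphi (K * delta * i%:R) / 2 + h / 8 + h / 8 ->
  Sh x /\ W^-1 <= `|GD x|.
Proof.
move=> iN hx.
have hx' : K * delta * i%:R - K * h * vphi (K * delta * i%:R) / 2 + h / 8 <= x <=
  K * delta * i%:R - K * h * vphi (K * delta * i%:R) / 2 + h / 4.
  by move: hx => /andP[u v]; apply/andP; split; lra.
have [hS hD hr _] := window _ _ iN hx'.
split; first by rewrite /= in_itv.
rewrite /= hD normrM sign_norm mulr1.
have /andP[w1 w2] := @wab_bnd R al be x hr.
by rewrite ger0_norm // (le_trans _ w1) // ltW // W0.
Qed.

Lemma O_lb_fin s : 0 < s ->
  ((((W^-1) `^ s * (128 * K ^+ 2)^-1) `^ s^-1)%:E <=
    Omega k (fdelta k delta) delta (wab al be) s%:E)%E.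
Proof.
move=> s0; apply: le_trans (Omega_ge _).
have kd := Kd_gt0; have [_ n2] := N_bnd; have k1 := K1.
have K0 : 0 < K by lra.
have h0 : 0 < h by rewrite divr_gt0 // mulr_gt0.
have Kh : K * h = delta / 8 by field; rewrite gt_eqF.
have dKd : delta <= K * delta by nra.
apply: le_trans (@LnormOn_lb_fin R Sh s (W^-1) GD N.+1
  (fun i => K * delta * i%:R - K * h * vphi (K * delta * i%:R) / 2 + h / 8)
  (fun i => K * delta * i%:R - K * h * vphi (K * delta * i%:R) / 2 + h / 8 + h / 8)
  s0 W0 _ _ _).
- have hs : \sum_(i < N.+1)
     ((K * delta * i%:R - K * h * vphi (K * delta * i%:R) / 2 + h / 8 + h / 8) -
      (K * delta * i%:R - K * h * vphi (K * delta * i%:R) / 2 + h / 8)) =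
     h / 8 * (N%:R + 1).
    rewrite (eq_bigr (fun _ => h / 8)); last by move=> i _; rewrite addrC addKr.
    rewrite sumr_const card_ord -[_ *+ N.+1]mulr_natr.
    by have -> : (N.+1)%:R = N%:R + 1 :> R by rewrite natr1.
  rewrite hs lee_fin; apply: ge0_ler_powR.
  + by rewrite invr_ge0 ltW.
  + rewrite nnegrE; apply: mulr_ge0; first exact: powR_ge0.
    by rewrite invr_ge0; apply: mulr_ge0 => //; exact: sqr_ge0.
  + rewrite nnegrE; apply: mulr_ge0; first exact: powR_ge0.
    apply: mulr_ge0; first by apply: divr_ge0 => //; exact: ltW.
    by apply: addr_ge0.
  + apply: ler_wpM2l; first exact: powR_ge0.
    rewrite -subr_ge0.
    have -> : h / 8 * (N%:R + 1) - (128 * K ^+ 2)^-1 =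
              (2 * (K * delta * (N%:R + 1)) - 1) / (128 * K ^+ 2).
      by field; rewrite gt_eqF.
    apply: divr_ge0; first lra.
    by apply: mulr_ge0 => //; exact: sqr_ge0.
- by move=> i _; lra.
- move=> i j x iN jN hi hj.
  have hi' : K * delta * i%:R - K * h * vphi (K * delta * i%:R) / 2 + h / 8 <= x <=
    K * delta * i%:R - K * h * vphi (K * delta * i%:R) / 2 + h / 4.
    by move: hi => /andP[u v]; apply/andP; split; lra.
  have hj' : K * delta * j%:R - K * h * vphi (K * delta * j%:R) / 2 + h / 8 <= x <=
    K * delta * j%:R - K * h * vphi (K * delta * j%:R) / 2 + h / 4.
    by move: hj => /andP[u v]; apply/andP; split; lra.
  have [_ _ _ /andP[a1 a2]] := window _ _ iN hi'.
  have [_ _ _ /andP[b1 b2]] := window _ _ jN hj'.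
  case: (ltngtP i j) => // h'; exfalso.
    have : i%:R + 1 <= j%:R :> R by rewrite natr1 ler_nat.
    by move=> h''; nra.
  have : j%:R + 1 <= i%:R :> R by rewrite natr1 ler_nat.
  by move=> h''; nra.
- by move=> i x iN hx; exact: (win_prop _ _ iN hx).
Qed.

Lemma O_lb_inf : ((W^-1)%:E <= Omega k (fdelta k delta) delta (wab al be) +oo%E)%E.
Proof.
apply: le_trans (Omega_ge _).
have k1 := K1.
have K0 : 0 < K by lra.
have h0 : 0 < h by rewrite divr_gt0 // mulr_gt0.
apply: (@LnormOn_lb_inf R _ _ _
  (K * delta * 0%:R - K * h * vphi (K * delta * 0%:R) / 2 + h / 8)
  (K * delta * 0%:R - K * h * vphi (K * delta * 0%:R) / 2 + h / 8 + h / 8)).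
  by lra.
by move=> x hx; apply: (win_prop 0).
Qed.

End Spec.

End Helpers.

Theorem lemma6p1 (R : realType) (k : nat) (alpha beta : R) (p q : \bar R) :
  (0 < k)%N -> (0 < p)%E -> (0 < q)%E ->
  exists c1 c2 c : R, [/\ 0 < c1, 0 < c2, 0 < c &
    forall delta : R, 0 < delta -> delta <= (2 * k%:R)^-1 ->
      [/\ (c1%:E <= Lnorm11 p (fun x => (wab alpha beta x * fdelta k delta x)%R))%E,
          (Lnorm11 p (fun x => (wab alpha beta x * fdelta k delta x)%R) <= c2%:E)%E &
          (c%:E <= Omega k (fdelta k delta) delta (wab alpha beta) q)%E]].
Proof.
move=> k0 p0 q0.
have Wp : 0 < expR (3 * (`|alpha| + `|beta|)) :> R by exact: expR_gt0.
have Wi : 0 < (expR (3 * (`|alpha| + `|beta|)))^-1 :> R by rewrite invr_gt0.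
have K2 : 0 < (128 * (k%:R : R) ^+ 2)^-1.
  by rewrite invr_gt0 mulr_gt0 // exprn_gt0 // ltr0n.
case: p p0 => [r| |] p0; case: q q0 => [s| |] q0 //.
- exists (((expR (3 * (`|alpha| + `|beta|)))^-1 `^ r * 4^-1) `^ r^-1).
  exists (((expR (3 * (`|alpha| + `|beta|))) `^ r) `^ r^-1).
  exists (((expR (3 * (`|alpha| + `|beta|)))^-1 `^ s * (128 * (k%:R : R) ^+ 2)^-1) `^ s^-1).
  split; [by rewrite !powR_gt0 // mulr_gt0 // powR_gt0 | by rewrite !powR_gt0 |
          by rewrite !powR_gt0 // mulr_gt0 // powR_gt0 |].
  move=> delta d0 dk; split.
  + by apply: A_lb_fin.
  + by apply: A_ub_fin.
  + by apply: O_lb_fin.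
- exists (((expR (3 * (`|alpha| + `|beta|)))^-1 `^ r * 4^-1) `^ r^-1).
  exists (((expR (3 * (`|alpha| + `|beta|))) `^ r) `^ r^-1).
  exists ((expR (3 * (`|alpha| + `|beta|)))^-1).
  split; [by rewrite !powR_gt0 // mulr_gt0 // powR_gt0 | by rewrite !powR_gt0 | by [] |].
  move=> delta d0 dk; split.
  + by apply: A_lb_fin.
  + by apply: A_ub_fin.
  + by apply: O_lb_inf.
- exists ((expR (3 * (`|alpha| + `|beta|)))^-1).
  exists (expR (3 * (`|alpha| + `|beta|))).
  exists (((expR (3 * (`|alpha| + `|beta|)))^-1 `^ s * (128 * (k%:R : R) ^+ 2)^-1) `^ s^-1).
  split; [by [] | by [] | by rewrite !powR_gt0 // mulr_gt0 // powR_gt0 |].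
  move=> delta d0 dk; split.
  + by apply: A_lb_inf.
  + by apply: A_ub_inf.
  + by apply: O_lb_fin.
- exists ((expR (3 * (`|alpha| + `|beta|)))^-1).
  exists (expR (3 * (`|alpha| + `|beta|))).
  exists ((expR (3 * (`|alpha| + `|beta|)))^-1).
  split => // delta d0 dk; split.
  + by apply: A_lb_inf.
  + by apply: A_ub_inf.
  + by apply: O_lb_inf.
Qed.
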